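(* Let $P$ be the uniform probability measure on $[0,1]$, $Q$ a probability measure on $[0,1]$ with unimodal density $r = dQ/dP$, maximiser $x^*$ and $r_{max} = \sup r<\infty$. Let $B_1, B_2,\dots$ be the bounds produced by AS* and $Z_n = P(B_n)$. Then for every $\gamma\in[0,1]$ and $n \ge 1$, $$\mathbb{P}(Z_n \ge w(\gamma)) \le \frac{1}{w(\gamma)}\left(\frac{3}{4}\right)^{n-1}.$$
   Context: Unimodal: $r$ non-decreasing on $[0,x^*]$, non-increasing on $[x^*,1]$, $r(x^* ) = r_{max}$. $S(\gamma) = \{x\in[0,1] : r(x)\ge\gamma r_{max}\}$ and $w(\gamma) = \inf\{\delta\in[0,1] : \exists z\in[0,1],\ S(\gamma)\subseteq[z,z+\delta]\}$. $\mathrm{TG}(\mu,\kappa)$ is the unit-scale Gumbel with location $\mu$ truncated to $(-\infty,\kappa]$ (density $\propto \exp(-(g-\mu)-e^{-(g-\mu)})$ on $g\le\kappa$). AS*: $B_1=[0,1]$, $G_0=+\infty$; for every $n\ge1$ draw $G_n\sim\mathrm{TG}(\log P(B_n),G_{n-1})$ and independently $X_n\sim P(\cdot\cap B_n)/P(B_n)$; set $L_n=\max_{k\le n}(\log r(X_k)+G_k)$, $U_n=\log r_{max}+G_n$, and $B_{n+1}=[\max(\{0\}\cup\{X_k:k\le n,X_k\le x^*\}),\ \min(\{1\}\cup\{X_k:k\le n,X_k\ge x^*\})]$. These sequences are defined for all $n$; the algorithm's number of steps is $T=\min\{n\ge1: L_n\ge U_n\}$. *)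

(* Defs.v *)
From HB Require Import structures.
From mathcomp Require Import all_boot all_order all_algebra.
From mathcomp Require Import all_classical all_reals all_analysis.
Set Implicit Arguments. Unset Strict Implicit. Unset Printing Implicit Defensive.
Import Order.TTheory GRing.Theory Num.Theory.
Import numFieldNormedType.Exports.
Local Open Scope classical_set_scope.
Local Open Scope ring_scope.

Definition unimodal (R : realType) (r : R -> R) (xs : R) : Prop :=
  [/\ 0 <= xs <= 1,
      (forall x y, 0 <= x -> x <= y -> y <= xs -> r x <= r y) &
      (forall x y, xs <= x -> x <= y -> y <= 1 -> r y <= r x)].

Definition Sset (R : realType) (r : R -> R) (rmax gamma : R) : set R :=
  [set x | 0 <= x <= 1 /\ gamma * rmax <= r x].

Definition wdth (R : realType) (r : R -> R) (rmax gamma : R) : R :=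
  inf [set d : R | 0 <= d <= 1 /\
        exists z : R, 0 <= z <= 1 /\ Sset r rmax gamma `<=` `[z, z + d]].

Definition mutually_independent (d : measure_display) (T : measurableType d)
  (R : realType) (P0 : probability T R) (W : nat -> T -> R) : Prop :=
  forall (s : seq nat) (A : nat -> set R), uniq s ->
    (forall i, measurable (A i)) ->
    P0 (\bigcap_(i in [set` s]) (W i @^-1` A i)) =
    (\prod_(i <- s) P0 (W i @^-1` A i))%E.

Definition uniform01 (d : measure_display) (T : measurableType d)
  (R : realType) (P0 : probability T R) (Y : T -> R) : Prop :=
  measurable_fun setT Y /\
  forall A : set R, measurable A ->
    P0 (Y @^-1` A) = (@lebesgue_measure R) (A `&` `[0%R, 1%R]).

(* The bound process of AS*, driven by the uniforms u : nat -> R.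
   Internally 0-indexed: bnd xs u k = B_{k+1} = [a, b] (as pair (a,b)),
   and Xs xs u k = X_{k+1} = a + (b - a) * u k, which is uniform on B_{k+1}
   (= P(. ∩ B_{k+1}) / P(B_{k+1}) for P uniform on [0,1]) when u k is uniform.
   B_{n+1} = [max({0} ∪ {X_k : k<=n, X_k <= x*}), min({1} ∪ {X_k : k<=n, X_k >= x*})]
   is computed incrementally. *)
Fixpoint bnd (R : realType) (xs : R) (u : nat -> R) (k : nat) : R * R :=
  match k with
  | 0 => (0, 1)
  | k'.+1 =>
      let ab := bnd xs u k' in
      let x := ab.1 + (ab.2 - ab.1) * u k' in
      (if x <= xs then Num.max ab.1 x else ab.1,
       if xs <= x then Num.min ab.2 x else ab.2)
  end.

Definition Xs (R : realType) (xs : R) (u : nat -> R) (k : nat) : R :=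
  let ab := bnd xs u k in ab.1 + (ab.2 - ab.1) * u k.

(* Z_n = P(B_n) (Lebesgue length of B_n), for n >= 1. *)
Definition Zn (R : realType) (xs : R) (u : nat -> R) (n : nat) : R :=
  let ab := bnd xs u n.-1 in ab.2 - ab.1.

(* Main.v *)
Require Import Defs.
From HB Require Import structures.
From mathcomp Require Import all_boot all_order all_algebra.
From mathcomp Require Import all_classical all_reals all_analysis.
From mathcomp Require Import ring lra zify.
Import Order.TTheory GRing.Theory Num.Theory.
Import numFieldNormedType.Exports.
Local Open Scope classical_set_scope.
Local Open Scope ring_scope.
Set Implicit Arguments. Unset Strict Implicit.
Local Open Scope nat_scope.
Lemma sum_succ (K : nat) : (2 * \sum_(0 <= j < K) j.+1 = K * K.+1)%N.
Proof.
elim: K => [|K IH]; first by rewrite big_geq.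
rewrite big_nat_recr //= mulnDr IH; lia.
Qed.

Lemma sum_f (K : nat) : (4 * \sum_(0 <= j < K) (K - j - j.+1) <= K * K)%N.
Proof.
elim: K {-2}K (leqnn K) => [|N IH] K hK.
  have -> : K = 0%N by lia.
  by rewrite big_geq.
case: K hK => [|[|K]] hK; first by rewrite big_geq.
  by rewrite big_nat1.
rewrite big_nat_recl //.
have -> : \sum_(0 <= i < K.+1) (K.+2 - i.+1 - i.+2)%N = \sum_(0 <= i < K.+1) (K - i - i.+1)%N.
  by apply: eq_bigr => i _; lia.
rewrite big_nat_recr //=.
have := IH K ltac:(lia).
lia.
Qed.

Lemma sum_max (K : nat) : (4 * \sum_(0 <= j < K) maxn j.+1 (K - j) <= 3 * (K * K) + 2 * K)%N.
Proof.
have -> : \sum_(0 <= j < K) maxn j.+1 (K - j) = 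
   (\sum_(0 <= j < K) j.+1 + \sum_(0 <= j < K) (K - j - j.+1))%N.
  rewrite -big_split /=; apply: eq_bigr => i _; rewrite maxnE; lia.
have := sum_succ K; have := sum_f K; lia.
Qed.

Local Open Scope ring_scope.
Lemma pow_bound (R : realType) (a e : R) (N : nat) : 0 <= a -> 0 <= e -> a + e <= 1 ->
  (a + e) ^+ N <= a ^+ N + N%:R * e.
Proof.
move=> ha he hae; elim: N => [|N IH]; first by rewrite !expr0 mul0r addr0.
have h1 : a ^+ N <= 1 by apply: exprn_ile1 => //; lra.
have h0 : 0 <= a ^+ N by apply: exprn_ge0.
have h2 : 0 <= (a + e) ^+ N by apply: exprn_ge0; lra.
rewrite !exprS -natr1.
have : (a + e) * (a + e) ^+ N <= (a + e) * (a ^+ N + N%:R * e).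
  by apply: ler_wpM2l => //; lra.
have hN : 0 <= N%:R * e :> R by apply: mulr_ge0 => //; apply: ler0n.
nra.
Qed.

Definition Mj (R : realType) (K j : nat) : R := Num.max (j.+1%:R / K%:R) (1 - j%:R / K%:R).
Definition qK (R : realType) (K : nat) : R := (\sum_(0 <= j < K) Mj R K j) / K%:R.

Lemma Mj_nat (R : realType) (K j : nat) : (j < K)%N ->
  Mj R K j = (maxn j.+1 (K - j))%:R / K%:R.
Proof.
move=> hj.
have hK : (0 < K%:R :> R) by rewrite ltr0n; lia.
rewrite /Mj -maxEnat natr_max [RHS]mulrC maxr_pMr; last by rewrite invr_ge0 ltW.
rewrite natrB; last by lia.
congr (Num.max _ _); field; lra.
Qed.

Lemma Mj_ge (R : realType) (K j : nat) : (0 < K)%N -> 1/2 <= Mj R K j.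
Proof.
move=> hK; have hK' : (0 < K%:R :> R) by rewrite ltr0n.
have e1 : j.+1%:R / K%:R = j%:R / K%:R + 1 / K%:R :> R by rewrite -natr1 mulrDl mul1r.
have e2 : 0 < 1 / K%:R :> R by rewrite divr_gt0.
rewrite /Mj maxEle e1; case: ifP => h; lra.
Qed.

Lemma qK_ge0 (R : realType) (K : nat) : (0 < K)%N -> 0 <= qK R K.
Proof.
move=> hK; rewrite /qK; apply: divr_ge0; last exact: ler0n.
apply: sumr_ge0 => j _; have := Mj_ge R j hK; lra.
Qed.

Lemma qK_le (R : realType) (K : nat) : (0 < K)%N -> qK R K <= 3/4 + 1 / (2 * K%:R).
Proof.
move=> hK; have hK' : (0 < K%:R :> R) by rewrite ltr0n.
rewrite /qK.
have -> : \sum_(0 <= j < K) Mj R K j = (\sum_(0 <= j < K) maxn j.+1 (K - j))%:R / K%:R.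
  rewrite natr_sum mulr_suml big_nat_cond [RHS]big_nat_cond.
  apply: eq_bigr => j /andP [/andP [_ hj] _]; exact: Mj_nat.
have := sum_max K; rewrite -(ler_nat R) natrM natrD !natrM.
move: (\sum_(0 <= j < K) maxn j.+1 (K - j))%N => S hS.
rewrite -mulrA -invfM ler_pdivrMr; last by rewrite mulr_gt0.
have -> : (3 / 4 + 1 / (2 * K%:R)) * (K%:R * K%:R) = (3 * (K%:R * K%:R) + 2 * K%:R) / 4 :> R.
  by field; lra.
rewrite ler_pdivlMr; last by lra.
rewrite mulrC. 
have -> : (3%:R : R) = 3 by []. 
have -> : (4%:R : R) = 4 by []. 
have -> : (2%:R : R) = 2 by []. 
done.
Qed.

Lemma limit_q (R : realType) (x y : R) (N : nat) : 0 <= y ->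
  (forall K, (2 <= K)%N -> x <= y * qK R K ^+ N) -> x <= y * (3/4) ^+ N.
Proof.
move=> hy hK; apply/ler_addgt0Pr => e he.
set K := (Num.truncn (y * N%:R / e)).+2.
have hK2 : (2 <= K)%N by [].
have hKp : (0 < K%:R :> R) by rewrite ltr0n.
have hlt : y * N%:R / e < K%:R.
  apply: (lt_le_trans (truncnS_gt _)); rewrite ler_nat; exact: leqnSn.
have hq0 := qK_ge0 R (ltnW hK2).
have hq1 := qK_le R (ltnW hK2).
have hinv : 0 <= 1 / (2 * K%:R) :> R by apply: divr_ge0 => //; lra.
have hinv1 : 1 / (2 * K%:R) <= 1/4 :> R.
  rewrite ler_pdivrMr; last by lra.
  have : (2%:R <= K%:R :> R) by rewrite ler_nat.
  lra.
have h1 : qK R K ^+ N <= (3/4 + 1 / (2 * K%:R)) ^+ N.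
  by apply: lerXn2r => //; rewrite nnegrE //; lra.
have h2 := @pow_bound R (3/4) (1 / (2 * K%:R)) N ltac:(lra) hinv ltac:(lra).
have h3 : y * N%:R * (1 / (2 * K%:R)) <= e.
  have h : y * N%:R < K%:R * e by rewrite -ltr_pdivrMr.
  rewrite div1r ler_pdivrMr; last by lra.
  have -> : e * (2 * K%:R) = 2 * (K%:R * e) by ring.
  have : 0 <= K%:R * e by apply: mulr_ge0; lra.
  lra.
apply: (le_trans (hK K hK2)).
have h4 : y * qK R K ^+ N <= y * ((3 / 4) ^+ N + N%:R * (1 / (2 * K%:R))).
  apply: ler_wpM2l => //; exact: le_trans h1 h2.
apply: (le_trans h4); rewrite mulrDr; apply: lerD => //.
by move: h3; rewrite -mulrA.
Qed.
Definition mm (R : realType) (x : R) : R := Num.max x (1 - x).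


Lemma mm_ge (R : realType) (x : R) : x <= mm x /\ 1 - x <= mm x /\ 1/2 <= mm x.
Proof.
rewrite /mm; split; first by rewrite le_max lexx.
split; first by rewrite le_max lexx orbT.
rewrite maxEle; case: ifP => h; lra.
Qed.

Lemma bnd_inv (R : realType) (xs : R) (u : nat -> R) (k : nat) :
  0 <= xs <= 1 -> (forall i, (i < k)%N -> 0 <= u i <= 1) ->
  (bnd xs u k).1 <= xs <= (bnd xs u k).2 /\
  (bnd xs u k).2 - (bnd xs u k).1 <= \prod_(0 <= i < k) mm (u i).
Proof.
move=> hxs; elim: k => [|k IH] hu.
  by rewrite /= big_geq //; split => //; lra.
have [/andP [ha hb] hl] := IH (fun i hi => hu i (ltnW hi)).
have /andP [u0 u1] := hu k (ltnSn k).
rewrite big_nat_recr //=.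
set a := (bnd xs u k).1 in ha hl *; set b := (bnd xs u k).2 in hb hl *.
set P := \prod_(0 <= i < k) mm (u i) in hl *.
have [m1 [m2 m3]] := mm_ge (u k).
set m := mm (u k) in m1 m2 m3 *.
set X := a + (b - a) * u k.
have hba : 0 <= b - a by lra.
have hX1 : a <= X by rewrite /X; nra.
have hX2 : X <= b by rewrite /X; nra.
case: (lerP X xs) => h1; case: (lerP xs X) => h2 /=.
- have -> : X = xs by apply/eqP; rewrite eq_le h1 h2.
  rewrite (max_r ha) (min_r hb).
  split; first by rewrite lexx.
  have : 0 <= P by lra.
  nra.
- rewrite (max_r hX1); split; first by rewrite h1 hb.
  rewrite /X; nra.
- rewrite (min_r hX2); split; first by rewrite ha h2.
  rewrite /X; nra.
- lra.
Qed.

Definition Ev d (T : measurableType d) (R : realType) (U : nat -> T -> R)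
  (t : seq nat) (A : nat -> set R) : set T :=
  \bigcap_(i in [set` t]) (U i @^-1` A i).

Definition Fv d (T : measurableType d) (R : realType) (U : nat -> T -> R)
  (s : seq nat) (c : R) : set T :=
  [set om | (forall i, i \in s -> 0 <= U i om <= 1) /\ c <= \prod_(i <- s) mm (U i om)].

Lemma preim_meas d (T : measurableType d) (R : realType) (f : T -> R) (A : set R) :
  measurable_fun setT f -> measurable A -> measurable (f @^-1` A).
Proof. by move=> mf mA; rewrite -[f @^-1` A]setTI; apply: mf. Qed.

Lemma Ev_meas d (T : measurableType d) (R : realType) (U : nat -> T -> R) t A :
  (forall i, measurable_fun setT (U i)) -> (forall i, measurable (A i)) ->
  measurable (Ev U t A).
Proof.
move=> hU hA; apply: fin_bigcap_measurable; first exact: finite_seq.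
by move=> i _; apply: preim_meas.
Qed.

Lemma mm_meas d (T : measurableType d) (R : realType) (f : T -> R) :
  measurable_fun setT f -> measurable_fun setT (fun om => mm (f om)).
Proof.
move=> mf; rewrite /mm.
apply: (measurable_realfun.measurable_maxr mf).
apply: measurable_realfun.measurable_funB => //; exact: measurable_cst.
Qed.

Lemma prod_meas d (T : measurableType d) (R : realType) (U : nat -> T -> R) s :
  (forall i, measurable_fun setT (U i)) ->
  measurable_fun setT (fun om => \prod_(i <- s) mm (U i om)).
Proof.
move=> hU; elim: s => [|k s IH].
  under eq_fun do rewrite big_nil; exact: measurable_cst.
under eq_fun do rewrite big_cons.
apply: measurable_realfun.measurable_funM => //; exact: mm_meas.
Qed.

Lemma Fv_meas d (T : measurableType d) (R : realType) (U : nat -> T -> R) s c :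
  (forall i, measurable_fun setT (U i)) -> measurable (Fv U s c).
Proof.
move=> hU.
have -> : Fv U s c = Ev U s (fun _ => `[0, 1]%classic) `&`
    ((fun om => \prod_(i <- s) mm (U i om)) @^-1` `[c, +oo[%classic).
  apply/seteqP; split => om /=.
    move=> [h1 h2]; split; last by rewrite in_itv /= h2.
    by move=> i /= hi; rewrite in_itv /=; apply: h1.
  move=> [h1 h2]; move: h2; rewrite /= in_itv /= andbT => h2; split => // i hi.
apply: measurableI; first by apply: Ev_meas => // i; exact: measurable_itv.
apply: preim_meas; [exact: prod_meas | exact: measurable_itv].
Qed.

Lemma pick_j (R : realType) (K : nat) (u : R) : (0 < K)%N -> 0 <= u <= 1 ->
  exists2 j, (j < K)%N & j%:R / K%:R <= u <= j.+1%:R / K%:R.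
Proof.
move=> hK /andP [u0 u1].
have hK' : (0 < K%:R :> R) by rewrite ltr0n.
have huK : 0 <= u * K%:R by apply: mulr_ge0 => //; exact: ltW.
have /andP [t1 t2] := truncn_itv huK.
case: (ltnP (Num.truncn (u * K%:R)) K) => ht.
  exists (Num.truncn (u * K%:R)) => //.
  by rewrite !ler_pdivrMr // ler_pdivlMr // t1 ltW.
exists K.-1; first by rewrite prednK // ltnSn.
rewrite prednK //.
have : K%:R <= u * K%:R.
  apply: le_trans t1; by rewrite ler_nat.
move=> h.
have hu : u = 1.
  apply/eqP; rewrite eq_le u1 /=.
  by rewrite -(ler_pM2r hK') mul1r.
rewrite hu divff ?lt0r_neq0 // lexx andbT.
rewrite ler_pdivrMr // mul1r ler_nat; lia.
Qed.

Lemma unif_I d (T : measurableType d) (R : realType) (P0 : probability T R) (Y : T -> R)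
  (K j : nat) : (j < K)%N -> uniform01 P0 Y ->
  P0 (Y @^-1` `[j%:R / K%:R, j.+1%:R / K%:R]%classic) = (1 / K%:R)%:E.
Proof.
move=> hj [_ hY]; rewrite hY; last exact: measurable_itv.
have hK' : (0 < K%:R :> R) by rewrite ltr0n; lia.
rewrite setIidl; last first.
  move=> x /=; rewrite !in_itv /= => /andP [h1 h2].
  have hj0 : 0 <= j%:R / K%:R :> R by apply: divr_ge0; [exact: ler0n | exact: ltW].
  have hj1 : j.+1%:R / K%:R <= 1 :> R by rewrite ler_pdivrMr // mul1r ler_nat.
  by rewrite (le_trans hj0 h1) (le_trans h2 hj1).
rewrite lebesgue_measure_itv /= lte_fin.
have hlt : j%:R / K%:R < j.+1%:R / K%:R :> R by rewrite ltr_pM2r ?invr_gt0 // ltr_nat.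
rewrite hlt -EFinB; congr (_%:E).
rewrite -mulrBl -natrB // subSnn; by [].
Qed.

Lemma unif_01 d (T : measurableType d) (R : realType) (P0 : probability T R) (Y : T -> R) :
  uniform01 P0 Y -> P0 (Y @^-1` `[0, 1]%classic) = 1%E.
Proof.
move=> [_ hY]; rewrite hY; last exact: measurable_itv.
by rewrite setIid lebesgue_measure_itv /= lte_fin ltr01 -EFinB subr0.
Qed.

Lemma prod_mm_ge0 (R : realType) (s : seq nat) (f : nat -> R) :
  0 <= \prod_(i <- s) mm (f i).
Proof. apply: prodr_ge0 => i _; have [_ [_ h]] := mm_ge (f i); lra. Qed.

Lemma sum_eq (R : realType) (K : nat) (M : nat -> R) (p Q c : R) : (0 < K)%N ->
  (forall j, M j != 0) -> c != 0 ->
  \sum_(j < K) (1 / K%:R * p * (Q / (c / M j))) = p * ((\sum_(j < K) M j) / K%:R * Q / c).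
Proof.
move=> hK hM hc; have hK' : K%:R != 0 :> R by rewrite pnatr_eq0 -lt0n.
rewrite !mulr_suml mulr_sumr; apply: eq_bigr => j _.
by field; rewrite hK' hc hM.
Qed.

Lemma core d (T : measurableType d) (R : realType) (P0 : probability T R)
  (U : nat -> T -> R) (hU : forall i, uniform01 P0 (U i))
  (hind : mutually_independent P0 U) (K : nat) (hK : (0 < K)%N) :
  forall s t A c, uniq (s ++ t) -> (forall i, measurable (A i)) -> 0 < c ->
  (P0 (Ev U t A `&` Fv U s c) <= P0 (Ev U t A) * ((qK R K ^+ size s) / c)%:E)%E.
Proof.
have mUi : forall i, measurable_fun setT (U i) by move=> i; exact: (proj1 (hU i)).
have hK' : (0 < K%:R :> R) by rewrite ltr0n.
elim=> [|k0 s IH] t A c hu hA hc.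
  have mE := Ev_meas t mUi hA.
  have hp := fineK (fin_num_measure P0 _ mE).
  case: (lerP c 1) => hc1.
    have mF := Fv_meas [::] c mUi.
    have hle : (P0 (Ev U t A `&` Fv U [::] c) <= P0 (Ev U t A))%E.
      by apply: le_measure; rewrite ?inE //; exact: measurableI.
    apply: (le_trans hle).
    rewrite -hp -EFinM lee_fin expr0 ler_peMr //; first exact: fine_ge0 (measure_ge0 _ _).
    by rewrite div1r invf_ge1.
  rewrite (_ : _ `&` _ = set0); first by rewrite measure0; apply: mule_ge0 => //; 
    rewrite lee_fin expr0 div1r invr_ge0 ltW.
  apply/seteqP; split => om //= [_ [_]]; rewrite big_nil => h; lra.
move: hu; rewrite cat_cons /= => /andP [hk0 hu].
have hk0t : k0 \notin t by apply: contra hk0; rewrite mem_cat orbC => ->.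
have hut : uniq t by move: hu; rewrite cat_uniq => /and3P [].
have hu' : uniq (s ++ k0 :: t).
  have /permPl hp := perm_catCA s [:: k0] t.
  by rewrite (perm_uniq hp) /= hk0 hu.
have mE := Ev_meas t mUi hA.
have hp := fineK (fin_num_measure P0 _ mE).
set p := fine (P0 (Ev U t A)) in hp *.
pose Ij := fun j : nat => (`[(j%:R / K%:R : R), j.+1%:R / K%:R]%classic : set R).
pose Aj := fun (j : nat) (i : nat) => if i == k0 then Ij j else A i.
have mAj : forall j i, measurable (Aj j i).
  by move=> j i; rewrite /Aj; case: ifP => _; [exact: measurable_itv | exact: hA].
have hMj : forall j, 0 < Mj R K j by move=> j; have := Mj_ge R j hK; lra.
pose F := fun j : nat => Ev U (k0 :: t) (Aj j) `&` Fv U s (c / Mj R K j).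
have mF : forall j, measurable (F j).
  by move=> j; apply: measurableI; [exact: Ev_meas | exact: Fv_meas].
have sub : Ev U t A `&` Fv U (k0 :: s) c `<=` \big[setU/set0]_(j < K) F j.
  rewrite -bigcup_mkord => om [hE [hin hprod]].
  have hu0 : 0 <= U k0 om <= 1 by apply: hin; rewrite in_cons eqxx.
  have [j hj /andP [j1 j2]] := pick_j hK hu0.
  exists j => //.
  split.
    move=> i /= hi; rewrite /Aj; case: eqP => [->|hne].
      by rewrite /Ij /= in_itv /= j1 j2.
    apply: hE; move: hi; rewrite /= in_cons => /orP [/eqP hi|//].
    by case: hne.
  split.
    by move=> i hi; apply: hin; rewrite in_cons hi orbT.
  move: hprod; rewrite big_cons => hprod.
  have hm : mm (U k0 om) <= Mj R K j.
    by rewrite /mm /Mj !maxEle; case: ifP; case: ifP; lra.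
  have h0 := prod_mm_ge0 s (fun i => U i om).
  rewrite ler_pdivrMr //; nra.
have mEF : measurable (Ev U t A `&` Fv U (k0 :: s) c).
  by apply: measurableI => //; exact: Fv_meas.
have le1 := @content_subadditive _ _ _ P0 _ F K (fun k _ => mF k) mEF sub.
apply: (le_trans le1).
have le2 : forall j : 'I_K, (P0 (F j) <= (1 / K%:R * p * (qK R K ^+ size s / (c / Mj R K j)))%:E)%E.
  move=> j.
  have := IH (k0 :: t) (Aj j) (c / Mj R K j) hu' (mAj j) (divr_gt0 hc (hMj j)).
  have -> : P0 (Ev U (k0 :: t) (Aj j)) = (1 / K%:R * p)%:E.
    rewrite /Ev (hind (k0 :: t) (Aj j) _ (mAj j)); last by rewrite /= hk0t hut.
    rewrite big_cons {1}/Aj eqxx /Ij (unif_I (ltn_ord j) (hU k0)) [RHS]EFinM.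
    congr (_ * _)%E.
    rewrite hp; symmetry; apply: etrans (hind t A hut hA) _.
    apply: eq_big_seq => i hi; rewrite /Aj.
    by have -> : (i == k0) = false by apply/eqP => hik; move: hk0t; rewrite -hik hi.
  by rewrite -EFinM.
apply: (@le_trans _ _ (\sum_(j < K) (1 / K%:R * p * (qK R K ^+ size s / (c / Mj R K j)))%:E)%E).
  by apply: lee_sum => j _; exact: le2.
rewrite sumEFin -hp -EFinM lee_fin sum_eq //; last by rewrite gt_eqF.
  rewrite /qK big_mkord /= exprS mulrA.
  by [].
by move=> j; rewrite gt_eqF.
Qed.

Lemma bnd_meas d (T : measurableType d) (R : realType) (xs : R) (U : nat -> T -> R)
  (mU : forall i, measurable_fun setT (U i)) (k : nat) :
  measurable_fun setT (fun om => (bnd xs (fun i => U i om) k).1) /\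
  measurable_fun setT (fun om => (bnd xs (fun i => U i om) k).2).
Proof.
elim: k => [|k [IH1 IH2]] /=; first by split; exact: measurable_cst.
have mX : measurable_fun setT (fun om => (bnd xs (fun i => U i om) k).1 +
   ((bnd xs (fun i => U i om) k).2 - (bnd xs (fun i => U i om) k).1) * U k om).
  apply: measurable_realfun.measurable_funD => //.
  apply: measurable_realfun.measurable_funM => //.
  exact: measurable_realfun.measurable_funB.
split.
  apply: measurable_fun_ifT => //.
    apply: measurable_realfun.measurable_fun_ler => //; exact: measurable_cst.
  exact: measurable_realfun.measurable_maxr.
apply: measurable_fun_ifT => //.
  apply: measurable_realfun.measurable_fun_ler => //; exact: measurable_cst.
exact: measurable_realfun.measurable_minr.
Qed.


Lemma Ev_nil d (T : measurableType d) (R : realType) (U : nat -> T -> R) A :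
  Ev U [::] A = setT.
Proof. by apply/seteqP; split => // om _ i /=; rewrite in_nil. Qed.

Unset Implicit Arguments. Set Strict Implicit.
Theorem mainTheorem4 (R : realType)
  (Q : probability R R) (r : R -> R) (xs : R)
  (hr0 : forall x, 0 <= x <= 1 -> 0 <= r x)
  (hrm : measurable_fun (`[0%R, 1%R] : set R) r)
  (hQ : forall A : set R, measurable A ->
          Q A = (\int[@lebesgue_measure R]_(x in A `&` `[0%R, 1%R]) (r x)%:E)%E)
  (hunim : unimodal r xs)
  (d : measure_display) (T : measurableType d) (P0 : probability T R)
  (U : nat -> T -> R)
  (hU : forall i, uniform01 P0 (U i))
  (hind : mutually_independent P0 U)
  (gamma : R) (hg : 0 <= gamma <= 1) (n : nat) (hn : (1 <= n)%N) :
  (P0 [set om | (wdth r (r xs) gamma <= Zn xs (fun k => U k om) n)%R]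
   <= (wdth r (r xs) gamma)%:E^-1 * ((3 / 4) ^+ n.-1)%:E)%E.
Proof.
have [hxs _ _] := hunim.
have mUi : forall i, measurable_fun setT (U i) by move=> i; exact: (proj1 (hU i)).
set w := wdth r (r xs) gamma.
have hw0 : 0 <= w.
  apply: lb_le_inf.
    exists 1; split; first by rewrite ler01 lexx.
    exists 0; split; first by rewrite lexx ler01.
    move=> x [hx _]; rewrite /= in_itv /= add0r; exact: hx.
  by move=> x [/andP [hx _] _].
have [hw|hw] := eqVneq w 0.
  rewrite hw inve0 gt0_mulye ?leey // lte_fin; apply: exprn_gt0; lra.
have hwp : 0 < w by rewrite lt0r hw hw0.
rewrite inver (negbTE hw) -EFinM.
set N := n.-1.
pose G := Ev U (iota 0 N) (fun _ => `[0, 1]%classic).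
have mG : measurable G by apply: Ev_meas => // i; exact: measurable_itv.
have PG : P0 G = 1%E.
  rewrite /G; apply: etrans (hind (iota 0 N) (fun _ => `[0, 1]%classic) (iota_uniq 0 N) (fun _ => measurable_itv _)) _.
  by rewrite big1_seq // => i _; exact: unif_01.
pose A := [set om | w <= Zn xs (fun k => U k om) n].
have mA : measurable A.
  have [m1 m2] := bnd_meas xs mUi N.
  have mZ : measurable_fun setT (fun om => Zn xs (fun k => U k om) n).
    exact: measurable_realfun.measurable_funB.
  have -> : A = (fun om => Zn xs (fun k => U k om) n) @^-1` `[w, +oo[%classic.
    by apply/seteqP; split => om /=; rewrite in_itv /= andbT.
  by apply: preim_meas => //; exact: measurable_itv.
have mF := Fv_meas (iota 0 N) w mUi.
have sub : A `<=` Fv U (iota 0 N) w `|` ~` G.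
  move=> om hA; case: (pselect (G om)) => hG; [left | by right].
  have hu : forall i, (i < N)%N -> 0 <= U i om <= 1.
    move=> i hi; have := hG i; rewrite /= mem_iota add0n hi => /(_ isT).
    by rewrite in_itv.
  have [_ hb] := bnd_inv hxs hu.
  split.
    by move=> i; rewrite mem_iota add0n; apply: hu.
  apply: (le_trans hA); rewrite /Zn -/N.
  by move: hb; rewrite /index_iota subn0.
have PA : (P0 A <= P0 (Fv U (iota 0 N) w))%E.
  apply: (le_trans (le_measure _ _ _ sub)); rewrite ?inE //.
    by apply: measurableU => //; exact: measurableC.
  apply: (le_trans (measureU2 _ mF (measurableC mG))).
  have hC : (P0 (~` G) <= 0)%E by rewrite (probability_setC P0 mG) PG subee.
  by apply: (le_trans (leeD2l _ hC)); rewrite adde0.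
have hK : forall K, (0 < K)%N -> (P0 A <= ((qK R K) ^+ N / w)%:E)%E.
  move=> K hK; apply: (le_trans PA).
  have := core hU hind hK (t := [::]) (A := fun _ => setT) (c := w) (s := iota 0 N).
  rewrite cats0 Ev_nil setTI size_iota => /(_ (iota_uniq 0 N) (fun _ => measurableT) hwp).
  have -> : P0 [set: T] = 1%E by exact: probability_setT.
  by rewrite mul1e.
have hfin := fineK (fin_num_measure P0 _ mA).
set x := fine (P0 A) in hfin.
rewrite -hfin lee_fin.
have -> : w^-1 * (3 / 4) ^+ N = (1 / w) * (3/4) ^+ N by rewrite div1r.
apply: limit_q; first by rewrite div1r invr_ge0.
move=> K hK2; have := hK K (ltnW hK2); rewrite -hfin lee_fin => h.
by rewrite mulrC div1r.
Qed.
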